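(* Let $\{|0\rangle,|1\rangle,|2\rangle\}$ be the computational basis of $\mathbb{C}^3$, $P_k=|k\rangle\langle k|$, and define on $\mathbb{C}^3\otimes\mathbb{C}^3$: $Q=I\otimes I-\sum_{k=0}^{2}P_k\otimes P_k-P_2\otimes P_0$, $|\Psi\rangle=\frac{1}{\sqrt3}(|00\rangle+|11\rangle+|22\rangle)$, $\rho_{ent}=\frac38|\Psi\rangle\langle\Psi|+\frac18 Q$, $|\Phi_a\rangle=|2\rangle\otimes\big(\sqrt{\tfrac{1+a}{2}}|0\rangle+\sqrt{\tfrac{1-a}{2}}|2\rangle\big)$ and $\rho_a=\frac{8a}{8a+1}\rho_{ent}+\frac{1}{8a+1}|\Phi_a\rangle\langle\Phi_a|$. Then for every $0<a<1$, $$d_{\max}(\rho_a)=\frac{2\sqrt2\,a}{8a+1},$$ and this value is attained, for example, by any diagonal unitary $U^B\in\mathbb{C}^{3\times3}$ with $U^B_{0,0}=-U^B_{1,1}=U^B_{2,2}$.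
   Context: For a state $\rho$ on $\mathbb{C}^M\otimes\mathbb{C}^N$ let $\rho_B=\mathrm{Tr}_A(\rho)$. A unitary $U^B$ on $\mathbb{C}^N$ is called cyclic for $\rho$ if $[\rho_B,U^B]=0$. Set $\rho_f=(I\otimes U^B)\rho(I\otimes U^{B\dagger})$ and define the Fu distance $d(\rho,U^B)=\frac{1}{\sqrt2}\|\rho-\rho_f\|_F$ (Frobenius norm $\|X\|_F=\sqrt{\mathrm{Tr}(X^\dagger X)}$). Define $d_{\max}(\rho)=\max\{d(\rho,U^B): U^B\text{ unitary},\ [\rho_B,U^B]=0\}$. *)

(* Defs.v *)
From HB Require Import structures.
From mathcomp Require Import all_boot all_order all_algebra.
From mathcomp Require Import spectral.
From mathcomp Require Import mxtens.
Set Implicit Arguments. Unset Strict Implicit. Unset Printing Implicit Defensive.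
Import Order.TTheory GRing.Theory Num.Theory.
Local Open Scope ring_scope.
Local Open Scope sesquilinear_scope.

(* Complex scalars: an arbitrary numeric closed field C (e.g. complex R). *)
Section Defs.
Variable C : numClosedFieldType.

Definition i0 : 'I_3 := @Ordinal 3 0 isT.
Definition i1 : 'I_3 := @Ordinal 3 1 isT.
Definition i2 : 'I_3 := @Ordinal 3 2 isT.

Definition ket (k : 'I_3) : 'cV[C]_3 := delta_mx k 0.
Definition proj (k : 'I_3) : 'M[C]_3 := delta_mx k k.

Definition outer {n} (v : 'cV[C]_n) : 'M[C]_n := v *m v ^t*.

(* partial trace over the first factor A = C^M of C^M (x) C^N;
   the tensor product is the Kronecker product tensmx (index (i,j) |-> i*N+j) *)
Definition ptraceA {M N : nat} (rho : 'M[C]_(M * N)) : 'M[C]_N :=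
  \matrix_(j, l) \sum_(i < M) rho (mxtens_index (i, j)) (mxtens_index (i, l)).

Definition frob {n} (X : 'M[C]_n) : C := sqrtC (\tr (X ^t* *m X)).

Definition rho_f {M N : nat} (rho : 'M[C]_(M * N)) (U : 'M[C]_N) : 'M[C]_(M * N) :=
  (1%:M *t U) *m rho *m (1%:M *t U) ^t*.

Definition fu_dist {M N : nat} (rho : 'M[C]_(M * N)) (U : 'M[C]_N) : C :=
  (sqrtC 2)^-1 * frob (rho - rho_f rho U).

Definition cyclic_for {M N : nat} (rho : 'M[C]_(M * N)) (U : 'M[C]_N) : Prop :=
  U \is unitarymx /\ ptraceA rho *m U = U *m ptraceA rho.

Definition is_dmax {M N : nat} (rho : 'M[C]_(M * N)) (v : C) : Prop :=
  (exists U, cyclic_for rho U /\ fu_dist rho U = v) /\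
  (forall U, cyclic_for rho U -> fu_dist rho U <= v).

Definition Qop : 'M[C]_(3 * 3) :=
  1%:M - \sum_(k < 3) (proj k *t proj k) - proj i2 *t proj i0.

Definition Psi : 'cV[C]_(3 * 3) :=
  (sqrtC 3)^-1 *: (ket i0 *t ket i0 + ket i1 *t ket i1 + ket i2 *t ket i2).

Definition rho_ent : 'M[C]_(3 * 3) := (3 / 8) *: outer Psi + (1 / 8) *: Qop.

Definition Phi (a : C) : 'cV[C]_(3 * 3) :=
  ket i2 *t (sqrtC ((1 + a) / 2) *: ket i0 + sqrtC ((1 - a) / 2) *: ket i2).

Definition rho_a (a : C) : 'M[C]_(3 * 3) :=
  (8 * a / (8 * a + 1)) *: rho_ent + (1 / (8 * a + 1)) *: outer (Phi a).

End Defs.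

(* Main.v *)
Require Import Defs.
From HB Require Import structures.
From mathcomp Require Import all_boot all_order all_algebra.
From mathcomp Require Import spectral mxtens.
From mathcomp Require Import ring lra.
Set Implicit Arguments. Unset Strict Implicit. Unset Printing Implicit Defensive.
Import Order.TTheory GRing.Theory Num.Theory.
Local Open Scope ring_scope.
Local Open Scope sesquilinear_scope.

Section Blk.
Variable C : numClosedFieldType.

Lemma sum_tens M N (F : 'I_(M*N) -> C) :
  \sum_p F p = \sum_(i < M) \sum_(j < N) F (mxtens_index (i,j)).
Proof.
rewrite pair_big /=. rewrite (reindex (@mxtens_index M N)) /=.
  by apply: eq_bigr => -[i j].
by exists (@mxtens_unindex M N) => x _; rewrite (mxtens_indexK, mxtens_unindexK).
Qed.

Definition blk {M N} (R : 'M[C]_(M*N)) (i k : 'I_M) : 'M[C]_N :=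
  \matrix_(j, l) R (mxtens_index (i,j)) (mxtens_index (k,l)).
Definition cblk {M N} (v : 'cV[C]_(M*N)) (i : 'I_M) : 'cV[C]_N :=
  \col_j v (mxtens_index (i,j)) 0.

Lemma blkD M N (R S : 'M[C]_(M*N)) i k : blk (R + S) i k = blk R i k + blk S i k.
Proof. by apply/matrixP=> j l; rewrite !mxE. Qed.
Lemma blkB M N (R S : 'M[C]_(M*N)) i k : blk (R - S) i k = blk R i k - blk S i k.
Proof. by apply/matrixP=> j l; rewrite !mxE. Qed.
Lemma blkZ M N c (R : 'M[C]_(M*N)) i k : blk (c *: R) i k = c *: blk R i k.
Proof. by apply/matrixP=> j l; rewrite !mxE. Qed.
Lemma blk_sum M N n (R : 'I_n -> 'M[C]_(M*N)) i k :
  blk (\sum_m R m) i k = \sum_m blk (R m) i k.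
Proof. by apply/matrixP=> j l; rewrite !(mxE, summxE); apply: eq_bigr=> m _; rewrite mxE. Qed.
Lemma blk_tens M N (A : 'M[C]_M) (B : 'M[C]_N) i k : blk (A *t B) i k = A i k *: B.
Proof. by apply/matrixP=> j l; rewrite !mxE !mxtens_indexK. Qed.
Lemma mxtens_index_eq M N (i k : 'I_M) (j l : 'I_N) :
  (mxtens_index (i,j) == mxtens_index (k,l)) = (i == k) && (j == l).
Proof. by rewrite (can_eq (@mxtens_indexK M N)) xpair_eqE. Qed.
Lemma blk1 M N i k : blk (1%:M : 'M[C]_(M*N)) i k = (i == k)%:R *: 1%:M.
Proof.
apply/matrixP=> j l; rewrite !mxE mxtens_index_eq.
by case: (i == k); rewrite ?mul1r ?mul0r.
Qed.
Lemma blkM M N (R S : 'M[C]_(M*N)) i k :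
  blk (R *m S) i k = \sum_m blk R i m *m blk S m k.
Proof.
apply/matrixP=> j l; rewrite !mxE summxE sum_tens.
by apply: eq_bigr=> m _; rewrite !mxE; apply: eq_bigr=> x _; rewrite !mxE.
Qed.
Lemma blk_adj M N (R : 'M[C]_(M*N)) i k : blk (R ^t*) i k = (blk R k i) ^t*.
Proof. by apply/matrixP=> j l; rewrite !mxE. Qed.
Lemma blk_outer M N (v : 'cV[C]_(M*N)) i k :
  blk (outer v) i k = cblk v i *m (cblk v k) ^t*.
Proof. by apply/matrixP=> j l; rewrite !mxE !big_ord1 !mxE. Qed.
Lemma trace_blk M N (R : 'M[C]_(M*N)) : \tr R = \sum_i \tr (blk R i i).
Proof. by rewrite /mxtrace sum_tens; apply: eq_bigr=> i _; apply: eq_bigr=> j _; rewrite mxE. Qed.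
Lemma ptraceA_blk M N (R : 'M[C]_(M*N)) : ptraceA R = \sum_i blk R i i.
Proof. by apply/matrixP=> j l; rewrite !mxE summxE; apply: eq_bigr=> i _; rewrite mxE. Qed.

Lemma frob_blk M N (X : 'M[C]_(M*N)) :
  \tr (X ^t* *m X) = \sum_i \sum_m \tr ((blk X m i) ^t* *m blk X m i).
Proof.
rewrite trace_blk; apply: eq_bigr=> i _; rewrite blkM raddf_sum.
by apply: eq_bigr=> m _; rewrite blk_adj.
Qed.

Lemma blk_rhof M N (R : 'M[C]_(M*N)) (U : 'M[C]_N) i k :
  blk (rho_f R U) i k = U *m blk R i k *m U ^t*.
Proof.
rewrite /rho_f blkM (bigD1 k) //= big1 ?addr0; last first.
  by move=> m /negPf mk; rewrite blk_adj blk_tens mxE eq_sym mk mulr0n scale0r trmx0 map_mx0 mulmx0.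
rewrite blk_adj blk_tens mxE eqxx mulr1n scale1r blkM (bigD1 i) //= big1 ?addr0.
  by rewrite blk_tens mxE eqxx mulr1n scale1r.
by move=> m /negPf mk; rewrite blk_tens mxE eq_sym mk mulr0n scale0r mul0mx.
Qed.
Lemma cblkD M N (u w : 'cV[C]_(M*N)) i : cblk (u + w) i = cblk u i + cblk w i.
Proof. by apply/matrixP=> j l; rewrite !mxE. Qed.
Lemma cblkZ M N c (u : 'cV[C]_(M*N)) i : cblk (c *: u) i = c *: cblk u i.
Proof. by apply/matrixP=> j l; rewrite !mxE. Qed.
Lemma cblk_tens M N (u : 'cV[C]_M) (w : 'cV[C]_N) i : cblk (u *t w) i = u i 0 *: w.
Proof. by apply/matrixP=> j l; rewrite !mxE !mxtens_indexK !ord1. Qed.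

Lemma ord3P (j : 'I_3) : j = i0 \/ j = i1 \/ j = i2.
Proof. by case: j => [[|[|[|//]]] p]; [left|right;left|right;right]; apply: val_inj. Qed.
Lemma eqs : (((i0 == i0) = true) * ((i1 == i1) = true) * ((i2 == i2) = true) * ((i0 == i1) = false) * ((i0 == i2) = false) * ((i1 == i0) = false) * ((i1 == i2) = false) * ((i2 == i0) = false) * ((i2 == i1) = false))%type.
Proof. by []. Qed.
Lemma sum3 (V : zmodType) (F : 'I_3 -> V) : \sum_i F i = F i0 + F i1 + F i2.
Proof. by rewrite !big_ord_recl big_ord0 addr0 addrA; congr (F _ + F _ + F _); apply: val_inj. Qed.
Lemma ket_e (k i : 'I_3) : ket C k i 0 = (i == k)%:R.
Proof. by rewrite mxE andbT. Qed.
Lemma proj_e (m i k : 'I_3) : proj C m i k = ((i == m) && (k == m))%:R.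
Proof. by rewrite mxE. Qed.
Lemma cadjZ m n c (A : 'M[C]_(m,n)) : (c *: A) ^t* = c^* *: A ^t*.
Proof. by apply/matrixP=> j l; rewrite !mxE rmorphM. Qed.
Lemma cadjD m n (A B : 'M[C]_(m,n)) : (A + B) ^t* = A ^t* + B ^t*.
Proof. by apply/matrixP=> j l; rewrite !mxE rmorphD. Qed.

Definition vv (a : C) : 'cV[C]_3 :=
  sqrtC ((1 + a) / 2) *: ket C i0 + sqrtC ((1 - a) / 2) *: ket C i2.

Lemma cblk_Psi i : cblk (Psi C) i = (sqrtC 3)^-1 *: ket C i.
Proof.
rewrite /Psi cblkZ !cblkD !cblk_tens !ket_e.
by case: (ord3P i) => [->|[->|->]]; rewrite !eqs ?scale1r ?scale0r ?addr0 ?add0r.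
Qed.
Lemma cblk_Phi a i : cblk (Phi a) i = ket C i2 i 0 *: vv a.
Proof. by rewrite /Phi cblk_tens. Qed.

Lemma blk_rho a i k : blk (rho_a a) i k =
  (8 * a / (8 * a + 1)) *: ((3/8) *: (((sqrtC 3)^-1 * ((sqrtC 3)^-1)^*) *: (ket C i *m (ket C k)^t*))
    + (1/8) *: ((i==k)%:R *: 1%:M - \sum_m proj C m i k *: proj C m - proj C i2 i k *: proj C i0))
  + (1 / (8*a+1)) *: ((ket C i2 i 0 * (ket C i2 k 0)^*) *: outer (vv a)).
Proof.
rewrite /rho_a /rho_ent blkD !blkZ blkD !blkZ !blk_outer !cblk_Psi !cblk_Phi.
rewrite /Qop !blkB blk1 blk_sum blk_tens.
rewrite cadjZ -scalemxAl -scalemxAr scalerA cadjZ -scalemxAl -scalemxAr scalerA.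
rewrite [_^* / _]mulrC -!scalerA.
under eq_bigr do rewrite blk_tens.
by [].
Qed.
Lemma s3 : (sqrtC 3)^-1 * ((sqrtC 3)^-1)^* = 3^-1 :> C.
Proof.
rewrite geC0_conj ?invr_ge0 ?sqrtC_ge0 ?ler0n // -invfM -expr2 sqrtCK //.
Qed.
Lemma ketket i k : ket C i *m (ket C k)^t* = delta_mx i k.
Proof. by rewrite /ket trmx_delta map_delta_mx mul_delta_mx. Qed.

Lemma hb (a : C) : 0 < a -> 8 * a + 1 != 0.
Proof. by move=> ha; rewrite gt_eqF // ltr_wpDl ?mulr_ge0 ?ler0n ?ltW. Qed.

Lemma blk_off a (i k : 'I_3) : i != k -> 0 < a ->
  blk (rho_a a) i k = (a / (8 * a + 1)) *: delta_mx i k.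
Proof.
move=> ik ha; rewrite blk_rho s3 ketket sum3 !proj_e !ket_e.
case: (ord3P i) ik => [->|[->|->]]; case: (ord3P k) => [->|[->|->]] //= _; rewrite ?eqs /=.
all: rewrite ?(mul0r, mulr0, scale0r, subr0, addr0, sub0r, conjC0, scaleN1r).
all: rewrite oppr0 !scaler0 !addr0 !scalerA; congr (_ *: _).
all: by field; rewrite hb.
Qed.
Lemma c_conj (x : C) : 0 <= x -> (sqrtC x)^* = sqrtC x.
Proof. by move=> hx; rewrite geC0_conj ?sqrtC_ge0. Qed.

Lemma cjD (x y : C) : (x + y)^* = x^* + y^*. Proof. exact: rmorphD. Qed.
Lemma cjM (x y : C) : (x * y)^* = x^* * y^*. Proof. exact: rmorphM. Qed.
Lemma cj1 : (1 : C)^* = 1. Proof. exact: conjC1. Qed.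
Lemma cj0 : (0 : C)^* = 0. Proof. exact: conjC0. Qed.
Ltac evB := rewrite blk_rho s3 ketket sum3 !proj_e !ket_e !eqs /=;
  rewrite !(mxE, big_ord1, eqs, eqxx, andbT, andbF) /=;
  rewrite ?cjD ?cjM ?cj1 ?cj0 ?mulr1 ?mulr0 ?mul1r ?mul0r ?addr0 ?add0r ?subr0 ?sub0r.

Section Bent.
Variable a : C.
Hypothesis ha0 : 0 < a.
Hypothesis ha1 : a < 1.
Let c0 := sqrtC ((1 + a) / 2).
Let c2 := sqrtC ((1 - a) / 2).
Let B := blk (rho_a a) i2 i2.
Lemma h1p : 0 <= (1 + a) / 2.
Proof. by rewrite divr_ge0 ?ler0n // addr_ge0 // ltW. Qed.
Lemma h1m : 0 <= (1 - a) / 2.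
Proof. by rewrite divr_ge0 ?ler0n // subr_ge0 ltW. Qed.

Lemma B00 : B i0 i0 = ((1 + a) / 2) / (8 * a + 1).
Proof. rewrite /B /c0 /c2; evB. rewrite !c_conj ?h1p ?h1m // -expr2 sqrtCK. field. by rewrite hb. Qed.
Lemma B22 : B i2 i2 = ((1 + a) / 2) / (8 * a + 1).
Proof. rewrite /B /c0 /c2; evB. rewrite !c_conj ?h1p ?h1m // -expr2 sqrtCK. field. by rewrite hb. Qed.
Lemma B11 : B i1 i1 = a / (8 * a + 1).
Proof. rewrite /B /c0 /c2; evB. field. by rewrite hb. Qed.
Lemma B02 : B i0 i2 = c0 * c2 / (8 * a + 1).
Proof. rewrite /B /c0 /c2; evB. rewrite !c_conj ?h1p ?h1m //. field. by rewrite hb. Qed.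
Lemma B20 : B i2 i0 = c0 * c2 / (8 * a + 1).
Proof. rewrite /B /c0 /c2; evB. rewrite !c_conj ?h1p ?h1m //. field. by rewrite hb. Qed.
Lemma B01 : B i0 i1 = 0.
Proof. rewrite /B /c0 /c2; evB. field. by rewrite hb. Qed.
Lemma B10 : B i1 i0 = 0.
Proof. rewrite /B /c0 /c2; evB. field. by rewrite hb. Qed.
Lemma B12 : B i1 i2 = 0.
Proof. rewrite /B /c0 /c2; evB. field. by rewrite hb. Qed.
Lemma B21 : B i2 i1 = 0.
Proof. rewrite /B /c0 /c2; evB. field. by rewrite hb. Qed.
Lemma blk_diag i : i != i2 -> blk (rho_a a) i i = (a / (8 * a + 1)) *: 1%:M.
Proof.
case: (ord3P i) => [->|[->|->]] // _; apply/matrixP => j l.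
all: case: (ord3P j) => [->|[->|->]]; case: (ord3P l) => [->|[->|->]]; evB.
all: by field; rewrite hb.
Qed.
End Bent.
End Blk.

Section S.
Variable C : numClosedFieldType.
Lemma delta_sand n (i m : 'I_n) (A : 'M[C]_n) :
  delta_mx i m *m A *m delta_mx m i = A m m *: delta_mx i i.
Proof.
apply/matrixP=> x y; rewrite !mxE (bigD1 m) //= big1 => [|z /negPf zm]; last first.
  by rewrite [delta_mx m i z y]mxE zm mulr0.
rewrite [delta_mx m i m y]mxE eqxx /= addr0 mxE (bigD1 m) //= big1 => [|w /negPf wm]; last by rewrite mxE wm andbF mul0r.
rewrite !mxE !eqxx !andbT addr0.
by case: (x == i); case: (y == i); rewrite /= ?mul1r ?mulr1 ?mul0r ?mulr0.
Qed.
Lemma tr_delta_sand n (i m : 'I_n) (A V : 'M[C]_n) :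
  \tr (delta_mx i m *m A *m delta_mx m i *m V) = A m m * V i i.
Proof.
rewrite delta_sand -scalemxAl mxtraceZ; congr (_ * _).
rewrite /mxtrace (bigD1 i) //= big1 => [|x /negPf xi].
  by rewrite addr0 mxE (bigD1 i) //= big1 ?mxE ?eqxx ?mul1r ?addr0 // => z /negPf zi; rewrite mxE zi andbF mul0r.
by rewrite mxE big1 // => z _; rewrite mxE xi mul0r.
Qed.
Lemma adjB m n (A B : 'M[C]_(m,n)) : (A - B) ^t* = A ^t* - B ^t*.
Proof. by apply/matrixP=> j l; rewrite !mxE rmorphB. Qed.
Lemma adjM m n p (A : 'M[C]_(m,n)) (B : 'M[C]_(n,p)) : (A *m B) ^t* = B ^t* *m A ^t*.
Proof. by rewrite trmx_mul map_mxM. Qed.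
Lemma adj_delta n (i m : 'I_n) : (delta_mx i m : 'M[C]_n) ^t* = delta_mx m i.
Proof. by rewrite trmx_delta map_delta_mx. Qed.

Lemma tr_off n (U : 'M[C]_n) (m i : 'I_n) d :
  U *m U ^t* = 1%:M -> U ^t* *m U = 1%:M ->
  \tr ((d *: delta_mx m i - U *m (d *: delta_mx m i) *m U ^t*) ^t* *m
       (d *: delta_mx m i - U *m (d *: delta_mx m i) *m U ^t*)) =
  d * d^* * (2 - U m m * (U i i)^* - U i i * (U m m)^*).
Proof.
move=> hU1 hU2.
rewrite -scalemxAr -scalemxAl -scalerBr cadjZ -scalemxAl -scalemxAr scalerA mxtraceZ.
congr (_ * _); first by rewrite mulrC.
set E := delta_mx m i.
rewrite adjB !adjM trmxCK adj_delta /E.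
rewrite mulmxBl !mulmxBr !raddfB /=.
have t1 : \tr (delta_mx i m *m delta_mx m i) = 1 :> C.
  by have := tr_delta_sand i m 1%:M 1%:M; rewrite !mulmx1 !mxE !eqxx mulr1.
have e4 : \tr (U *m (delta_mx i m *m U ^t*) *m (U *m delta_mx m i *m U ^t*)) = 1.
  rewrite -!mulmxA [U ^t* *m (U *m _)]mulmxA hU2 mul1mx mxtrace_mulC.
  by rewrite -!mulmxA hU2 mulmx1 t1.
rewrite e4 t1 !mulmxA tr_delta_sand.
rewrite mxtrace_mulC !mulmxA tr_delta_sand.
rewrite !mxE. ring.
Qed.
End S.


Lemma cjN1 (C : numClosedFieldType) : (-1 : C)^* = -1. Proof. exact: rmorphN1. Qed.
Lemma tr_ge0 (C : numClosedFieldType) n (X : 'M[C]_n) : 0 <= \tr (X ^t* *m X).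
Proof.
rewrite /mxtrace; apply: sumr_ge0 => i _; rewrite mxE; apply: sumr_ge0 => j _.
by rewrite !mxE mulrC mul_conjC_ge0.
Qed.

Section Main.
Variable C : numClosedFieldType.
Variable a : C.
Hypothesis ha0 : 0 < a.
Hypothesis ha1 : a < 1.

Lemma ptrace_eq : ptraceA (rho_a a) =
  (a / (8 * a + 1)) *: 1%:M + (a / (8 * a + 1)) *: 1%:M + blk (rho_a a) i2 i2.
Proof. by rewrite ptraceA_blk sum3 (@blk_diag _ _ ha0 i0) // (@blk_diag _ _ ha0 i1). Qed.

Lemma comm_B (U : 'M[C]_3) :
  (ptraceA (rho_a a) *m U = U *m ptraceA (rho_a a)) <->
  (blk (rho_a a) i2 i2 *m U = U *m blk (rho_a a) i2 i2).
Proof.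
rewrite ptrace_eq !mulmxDl !mulmxDr -!scalemxAl -!scalemxAr mul1mx mulmx1.
by split => [/addrI|->].
Qed.

Lemma mulE m n p (A : 'M[C]_(m,n)) (B : 'M[C]_(n,p)) j l :
  (A *m B) j l = \sum_k A j k * B k l.
Proof. by rewrite mxE. Qed.

Let P := (1 + a) / 2 / (8 * a + 1).
Let Q := sqrtC ((1 + a) / 2) * sqrtC ((1 - a) / 2) / (8 * a + 1).
Let dd := a / (8 * a + 1).

Lemma Q_neq0 : Q != 0.
Proof.
rewrite /Q !mulf_neq0 ?invr_eq0 ?(hb ha0) ?sqrtC_eq0 //.
  by rewrite mulf_neq0 ?invr_eq0 ?pnatr_eq0 // gt_eqF // addr_gt0.
by rewrite mulf_neq0 ?invr_eq0 ?pnatr_eq0 // subr_eq0 eq_sym lt_eqF.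
Qed.

Lemma K_neq0 : (P - dd) ^+ 2 - Q ^+ 2 != 0.
Proof.
have -> : (P - dd) ^+ 2 - Q ^+ 2 = - (a * (1 - a)) / (2 * (8 * a + 1) ^+ 2).
  rewrite /Q !expr_div_n exprMn !sqrtCK /P /dd; field; rewrite hb //.
rewrite mulf_neq0 ?invr_eq0 ?oppr_eq0 ?mulf_neq0 ?expf_neq0 ?(hb ha0) ?pnatr_eq0 //.
  by rewrite gt_eqF.
by rewrite subr_eq0 eq_sym lt_eqF.
Qed.

Lemma cyc_struct (U : 'M[C]_3) :
  blk (rho_a a) i2 i2 *m U = U *m blk (rho_a a) i2 i2 ->
  [/\ U i1 i0 = 0, U i1 i2 = 0 & U i2 i2 = U i0 i0].
Proof.
move=> hBU.
have E : forall j l, (blk (rho_a a) i2 i2 *m U) j l = (U *m blk (rho_a a) i2 i2) j l by move=> j l; rewrite hBU.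
have e10 := E i1 i0; have e12 := E i1 i2; have e02 := E i0 i2.
move: e10 e12 e02; rewrite !mulE !sum3 ?B00 ?B11 ?B22 ?B02 ?B20 ?B01 ?B10 ?B12 ?B21 //.
move=> e10 e12 e02.
rewrite ?mul0r ?mulr0 ?add0r ?addr0 in e10 e12 e02.
set K := (P - dd) ^+ 2 - Q ^+ 2.
have h10 : K * U i1 i0 = (P - dd) * (U i1 i0 * P + U i1 i2 * Q - dd * U i1 i0)
   - Q * (U i1 i0 * Q + U i1 i2 * P - dd * U i1 i2) by rewrite /K; ring.
have h12 : K * U i1 i2 = (P - dd) * (U i1 i0 * Q + U i1 i2 * P - dd * U i1 i2)
   - Q * (U i1 i0 * P + U i1 i2 * Q - dd * U i1 i0) by rewrite /K; ring.
have h02 : Q * (U i2 i2 - U i0 i0) = (P * U i0 i2 + Q * U i2 i2) - (U i0 i0 * Q + U i0 i2 * P) by ring.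
rewrite -e10 -e12 !subrr !mulr0 subrr in h10 h12.
rewrite e02 subrr in h02.
split.
- by move/eqP: h10; rewrite mulf_eq0 (negPf K_neq0) => /eqP.
- by move/eqP: h12; rewrite mulf_eq0 (negPf K_neq0) => /eqP.
- by move/eqP: h02; rewrite mulf_eq0 (negPf Q_neq0) subr_eq0 => /eqP.
Qed.

Lemma T_formula (U : 'M[C]_3) : U *m U ^t* = 1%:M ->
  blk (rho_a a) i2 i2 *m U = U *m blk (rho_a a) i2 i2 -> U i2 i2 = U i0 i0 ->
  \tr ((rho_a a - rho_f (rho_a a) U) ^t* *m (rho_a a - rho_f (rho_a a) U)) =
  dd * dd^* * (12 + 4 * (U i1 i1 * (U i1 i1)^*)
     - 4 * ((U i0 i0 + U i1 i1) * (U i0 i0 + U i1 i1)^*)).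
Proof.
move=> hU hBU h20.
have hU2 : U ^t* *m U = 1%:M by apply: mulmx1C.
have zdiag : forall c, c *: 1%:M - U *m (c *: 1%:M) *m U ^t* = 0 :> 'M[C]_3.
  by move=> c; rewrite -scalemxAr mulmx1 -scalemxAl hU subrr.
have zB : blk (rho_a a) i2 i2 - U *m blk (rho_a a) i2 i2 *m U ^t* = 0.
  by rewrite -hBU -mulmxA hU mulmx1 subrr.
rewrite frob_blk !sum3 !blkB !blk_rhof.
rewrite (@blk_diag _ _ ha0 i0) // (@blk_diag _ _ ha0 i1) // !zdiag zB.
rewrite (@blk_off _ _ i0 i1) // (@blk_off _ _ i0 i2) // (@blk_off _ _ i1 i0) //.
rewrite (@blk_off _ _ i1 i2) // (@blk_off _ _ i2 i0) // (@blk_off _ _ i2 i1) //.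
rewrite !tr_off // trmx0 map_mx0 mul0mx mxtrace0 -/dd h20 !cjD.
ring.
Qed.

Lemma zz1 (U : 'M[C]_3) : U *m U ^t* = 1%:M -> U i1 i0 = 0 -> U i1 i2 = 0 ->
  U i1 i1 * (U i1 i1)^* = 1.
Proof.
move=> hU h10 h12.
have : (U *m U ^t*) i1 i1 = (1%:M : 'M[C]_3) i1 i1 by rewrite hU.
by rewrite mulE sum3 !mxE h10 h12 !mul0r add0r addr0 eqxx.
Qed.

Lemma dd_ge0 : 0 <= dd.
Proof.
apply: divr_ge0; first exact: ltW.
by rewrite addr_ge0 ?ler01 // mulr_ge0 ?ler0n // ltW.
Qed.

Lemma s2_4 (x : C) : (sqrtC 2)^-1 * (4 * x) = 2 * sqrtC 2 * x.
Proof.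
have hs : sqrtC 2 != 0 :> C by rewrite sqrtC_eq0 pnatr_eq0.
have h4 : (4 : C) = 2 * sqrtC 2 ^+ 2 by rewrite sqrtCK -natrM.
rewrite h4; field; exact: hs.
Qed.

Lemma val_bound (w : C) : 0 <= w ->
  0 <= dd * dd^* * (12 + 4 * 1 - 4 * w) ->
  (sqrtC 2)^-1 * sqrtC (dd * dd^* * (12 + 4 * 1 - 4 * w)) <= 2 * sqrtC 2 * a / (8 * a + 1)
  /\ (w = 0 -> (sqrtC 2)^-1 * sqrtC (dd * dd^* * (12 + 4 * 1 - 4 * w)) = 2 * sqrtC 2 * a / (8 * a + 1)).
Proof.
move=> hw hX.
have hc : dd^* = dd by rewrite geC0_conj // dd_ge0.
have e0 : dd * dd^* * (12 + 4 * 1 - 4 * 0) = (4 * dd) ^+ 2 by rewrite hc; ring.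
have v0 : (sqrtC 2)^-1 * sqrtC (dd * dd^* * (12 + 4 * 1 - 4 * 0)) = 2 * sqrtC 2 * a / (8 * a + 1).
  rewrite e0 sqrCK; last by rewrite mulr_ge0 ?ler0n // dd_ge0.
  by rewrite (s2_4 dd) /dd mulrA.
split; last by move=> ->.
rewrite -v0 ler_pM2l; last by rewrite invr_gt0 sqrtC_gt0 ltr0n.
rewrite ler_sqrtC ?nnegrE //; last by rewrite e0 exprn_ge0 // mulr_ge0 ?ler0n ?dd_ge0.
rewrite -subr_ge0.
have -> : dd * dd^* * (12 + 4 * 1 - 4 * 0) - dd * dd^* * (12 + 4 * 1 - 4 * w) = 4 * (dd * dd^*) * w by ring.
rewrite hc; apply: mulr_ge0 => //; apply: mulr_ge0; first exact: ler0n.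
by apply: mulr_ge0; exact: dd_ge0.
Qed.

Lemma part_bound (U : 'M[C]_3) : cyclic_for (rho_a a) U ->
  fu_dist (rho_a a) U <= 2 * sqrtC 2 * a / (8 * a + 1).
Proof.
case=> /unitarymxP hU /comm_B hBU.
have [h10 h12 h20] := cyc_struct hBU.
have hT := T_formula hU hBU h20.
have hz := zz1 hU h10 h12.
have h0 := tr_ge0 (rho_a a - rho_f (rho_a a) U).
rewrite hT hz in h0.
rewrite /fu_dist /frob hT hz.
exact: (val_bound (mul_conjC_ge0 _) h0).1.
Qed.

Lemma part_diag (U : 'M[C]_3) : is_diag_mx U -> U \is unitarymx ->
  U i0 i0 = - U i1 i1 -> U i0 i0 = U i2 i2 ->
  cyclic_for (rho_a a) U /\ fu_dist (rho_a a) U = 2 * sqrtC 2 * a / (8 * a + 1).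
Proof.
move=> /is_diag_mxP hD hUu h01 h02.
have z01 := hD i0 i1 isT; have z02 := hD i0 i2 isT; have z10 := hD i1 i0 isT.
have z12 := hD i1 i2 isT; have z20 := hD i2 i0 isT; have z21 := hD i2 i1 isT.
have hBU : blk (rho_a a) i2 i2 *m U = U *m blk (rho_a a) i2 i2.
{ apply/matrixP => j l; rewrite !mulE !sum3.
  case: (ord3P j) => [->|[->|->]]; case: (ord3P l) => [->|[->|->]].
  all: rewrite ?B00 ?B11 ?B22 ?B02 ?B20 ?B01 ?B10 ?B12 ?B21 // ?z01 ?z02 ?z10 ?z12 ?z20 ?z21 -?h02.
  all: ring. }
have hU := unitarymxP hUu.
split; first by split => //; apply/comm_B.
have hT := T_formula hU hBU (esym h02).
have hz := zz1 hU z10 z12.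
have h0 := tr_ge0 (rho_a a - rho_f (rho_a a) U).
rewrite hT hz h01 addNr mul0r in h0.
rewrite /fu_dist /frob hT hz h01 addNr mul0r.
by apply: (val_bound _ h0).2.
Qed.
End Main.

Unset Implicit Arguments.
Theorem theorem5 (C : numClosedFieldType) (a : C) (ha0 : 0 < a) (ha1 : a < 1) :
  is_dmax (rho_a a) (2 * sqrtC 2 * a / (8 * a + 1)) /\
  (forall U : 'M[C]_3,
     is_diag_mx U -> U \is unitarymx ->
     U i0 i0 = - U i1 i1 -> U i0 i0 = U i2 i2 ->
     cyclic_for (rho_a a) U /\
     fu_dist (rho_a a) U = 2 * sqrtC 2 * a / (8 * a + 1)).
Proof.
split; last exact: part_diag.
split; last by move=> U; exact: part_bound.
pose U0 : 'M[C]_3 := diag_mx (\row_j (if j == i1 then -1 else 1)).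
exists U0; apply: part_diag => //.
- exact: diag_mx_is_diag.
- apply/unitarymxP/matrixP => j l; rewrite mulE sum3;
  case: (ord3P j) => [->|[->|->]]; case: (ord3P l) => [->|[->|->]];
  rewrite !mxE /= ?cj1 ?cj0 ?cjN1; ring.
- by rewrite !mxE /= mulr1n opprK.
- by rewrite !mxE.
Qed.
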